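(* Let $q\ge 2$. The additive group $\mathbb{Z}[\tfrac1q]$ has uncountably many submonoids.
   Context: $\mathbb{Z}[\tfrac1q]=\{nq^i: n,i\in\mathbb{Z}\}$, viewed as an additive group; a submonoid is a subset containing $0$ and closed under addition. *)

(* Defs.v *)
From mathcomp Require Import all_boot all_order all_algebra.
Set Implicit Arguments. Unset Strict Implicit. Unset Printing Implicit Defensive.
Import Order.TTheory GRing.Theory Num.Theory.
Local Open Scope ring_scope.

Definition Zinvq (q : nat) (x : rat) : Prop :=
  exists (n i : int), x = n%:~R * ((q%:R : rat) ^ i).

Definition is_submonoid_Zinvq (q : nat) (S : rat -> Prop) : Prop :=
  (forall x, S x -> Zinvq q x) /\ S 0 /\ (forall x y, S x -> S y -> S (x + y)).

Definition countable_family (F : (rat -> Prop) -> Prop) : Prop :=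
  exists f : (rat -> Prop) -> nat,
    forall S T, F S -> F T -> f S = f T -> forall x, S x <-> T x.

(* Main.v *)
Require Import Defs.
From mathcomp Require Import all_boot all_order all_algebra.
From mathcomp Require Import ring lra zify.
Set Implicit Arguments. Unset Strict Implicit. Unset Printing Implicit Defensive.
Import Order.TTheory GRing.Theory Num.Theory.
Local Open Scope ring_scope.

Section S.
Variable q : nat.
Hypothesis hq : (2 <= q)%N.

Definition D (x : rat) := exists (n : int) (j : nat), x = n%:~R / ((q%:R : rat) ^+ j).

Lemma qpos : (0 : rat) < q%:R.
Proof. rewrite ltr0n; lia. Qed.

Lemma qj_neq0 j : (q%:R : rat) ^+ j != 0.
Proof. by rewrite expf_neq0 // gt_eqF // qpos. Qed.

Lemma D_Z x : D x -> Zinvq q x.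
Proof.
case=> n [j ->]; case: j => [|j].
  by exists n, 0; rewrite expr0 divr1.
by exists n, (Negz j).
Qed.

Lemma D_add x y : D x -> D y -> D (x + y).
Proof.
case=> n1 [j1 ->] [n2 [j2 ->]].
exists (n1 * (q ^ j2)%:Z + n2 * (q ^ j1)%:Z), (j1 + j2)%N.
have h1 := qj_neq0 j1; have h2 := qj_neq0 j2.
rewrite exprD rmorphD !rmorphM /= -!pmulrn !natrX.
by field; rewrite h1 h2.
Qed.

Definition e (k : nat) : rat := 1 + ((q%:R : rat) ^+ k.+1)^-1.

Lemma D_e k : D (e k).
Proof.
exists ((q ^ k.+1).+1)%:Z, k.+1.
rewrite /e; have h := qj_neq0 k.+1.
have -> : ((q ^ k.+1).+1%:Z)%:~R = (q%:R ^+ k.+1 + 1 : rat) by rewrite -pmulrn -addn1 natrD natrX.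
by field.
Qed.

Lemma qk_gt1 k : (1 : rat) < (q%:R : rat) ^+ k.+1.
Proof. rewrite -natrX ltr1n; have : (q <= q ^ k.+1)%N. 
  by rewrite -{1}(expn1 q) leq_pexp2l //; lia.
lia. Qed.

Lemma e_bounds k : 1 < e k /\ e k < 2.
Proof.
have h := qk_gt1 k. have p : 0 < (q%:R : rat) ^+ k.+1 by lra.
split; rewrite /e.
  by rewrite ltrDl invr_gt0.
have : ((q%:R : rat) ^+ k.+1)^-1 < 1 by rewrite invf_lt1.
lra.
Qed.

Lemma e_inj k m : e k = e m -> k = m.
Proof.
rewrite /e => /addrI /invr_inj; rewrite -!natrX => /eqP.
rewrite eqr_nat => /eqP /(expnI hq); lia.
Qed.

Definition SA (A : nat -> Prop) (x : rat) : Prop :=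
  x = 0 \/ (D x /\ 2 <= x) \/ exists k, A k /\ x = e k.

Lemma SA_nz A x : SA A x -> x = 0 \/ (D x /\ 1 <= x).
Proof.
case=> [->|[[Dx h]|[k [_ ->]]]]; [by left| right; split => //; lra|].
right; split; first exact: D_e. by have [] := e_bounds k; lra.
Qed.

Lemma SA_sub A : is_submonoid_Zinvq q (SA A).
Proof.
split; last split.
- move=> x /SA_nz [->|[Dx _]]; last exact: D_Z.
  by exists 0, 0; rewrite mulr0z mul0r.
- by left.
- move=> x y Hx Hy.
  case: (SA_nz Hx) => [->|[Dx hx]]; first by rewrite add0r.
  case: (SA_nz Hy) => [->|[Dy hy]]; first by rewrite addr0.
  right; left; split; [exact: D_add|lra].
Qed.

Lemma SA_e A m : SA A (e m) <-> A m.
Proof.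
split; last by move=> h; right; right; exists m.
have [h1 h2] := e_bounds m.
case=> [h|[[_ h]|[k [Ak /e_inj ->]]]] //; lra.
Qed.

End S.

Theorem mainTheorem9 (q : nat) (hq : (2 <= q)%N) :
  ~ countable_family (is_submonoid_Zinvq q).
Proof.
case=> f Hf.
pose A n := exists B, f (SA q B) = n /\ ~ B n.
pose m := f (SA q A).
have eqv B : f (SA q B) = m -> forall k, B k <-> A k.
  move=> hB k.
  have := Hf _ _ (SA_sub hq B) (SA_sub hq A) hB (e q k).
  by rewrite !SA_e.
have nA : ~ A m.
  move=> Am; case: (Am) => B [hB nB]; by apply: nB; apply/(eqv B hB).
have hm : f (SA q A) = m by [].
apply: (nA); exists A; exact: (conj hm nA).
Qed.
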